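(* For all $\Sigma\subseteq\mathsf{FOR}$ and $\varphi\in\mathsf{FOR}$: $\Sigma\vdash_{\mathcal{F}SN}\varphi$ if and only if $\Sigma\vDash_{\mathsf{R}^{sn}}\varphi$, where $\mathsf{R}^{sn}$ is the set of Epstein relations $\mathfrak{R}$ that are symmetric and satisfy: for all $\varphi,\psi$, $\langle\neg\varphi,\psi\rangle\in\mathfrak{R}$ implies $\langle\varphi,\psi\rangle\in\mathfrak{R}$.
   Context: Language: propositional letters $\Phi=\{p_0,p_1,\dots\}$; connectives $\neg$, $\lor,\wedge,\to,\leftrightarrow,\vartriangle,\looparrowright$; $\mathsf{FOR}$ the set of all formulas. An Epstein model is $\langle v,\mathfrak{R}\rangle$ with $v:\Phi\to\{0,1\}$ and $\mathfrak{R}\subseteq\mathsf{FOR}^2$ (an Epstein relation); truth: letters via $v$, boolean connectives classical, $\langle v,\mathfrak{R}\rangle\vDash\varphi\vartriangle\psi$ iff both true and $\langle\varphi,\psi\rangle\in\mathfrak{R}$; $\langle v,\mathfrak{R}\rangle\vDash\varphi\looparrowright\psi$ iff $\varphi\to\psi$ true and $\langle\varphi,\psi\rangle\in\mathfrak{R}$. For a set $\mathsf{R}$ of relations, $\Sigma\vDash_{\mathsf{R}}\varphi$ iff for every $\mathfrak{R}\in\mathsf{R}$ and every valuation $v$, if $\langle v,\mathfrak{R}\rangle$ satisfies all of $\Sigma$ then it satisfies $\varphi$. $\mathcal{F}$ is the least set containing all classical tautologies of the language and the axioms $(p\looparrowright q)\to(p\to q)$ and $(p\vartriangle q)\leftrightarrow((p\looparrowright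 q)\wedge(p\wedge q))$, closed under uniform substitution and modus ponens. $\mathcal{F}SN$ is the least set containing $\mathcal{F}$ and the axioms ($p,q$ distinct letters) $(s)\ (p\looparrowright q)\to((q\looparrowright p)\lor\neg(q\to p))$; $(n1)\ (\neg p\looparrowright q)\to((p\looparrowright q)\lor\neg(p\to q))$; $(n2)\ ((\neg\neg p\looparrowright q)\wedge\neg(\neg p\to q))\to(p\looparrowright q)$; $(sn)\ (\neg(p\to q)\wedge(\neg p\looparrowright q))\to(q\looparrowright p)$; $(ns)\ (\neg(\neg p\to q)\wedge(q\looparrowright\neg p))\to(p\looparrowright q)$, closed under uniform substitution and modus ponens. $\Sigma\vdash_{\mathcal{F}SN}\varphi$ iff there is a finite sequence ending in $\varphi$ each member of which is in $\mathcal{F}SN\cup\Sigma$ or follows from two earlier members by modus ponens. *)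

(* Defs.v *)
From Stdlib Require Import Arith.

(* Formulas: propositional letters p_n and connectives
   neg, or, and, ->, <->, triangle (Tri), looparrowright (Rel). *)
Inductive form : Type :=
| Var  : nat -> form
| Neg  : form -> form
| Or   : form -> form -> form
| And  : form -> form -> form
| Impl : form -> form -> form
| Iff  : form -> form -> form
| Tri  : form -> form -> form
| Rel  : form -> form -> form.

(* Boolean evaluation where letters get values from [a] and the
   non-classical compounds Tri/Rel are treated as atoms, with arbitrary
   truth values given by [t] and [l]. *)
Fixpoint beval (a : nat -> bool) (t l : form -> form -> bool) (f : form) : bool :=
  match f with
  | Var n => a n
  | Neg f1 => negb (beval a t l f1)
  | Or f1 f2 => beval a t l f1 || beval a t l f2
  | And f1 f2 => beval a t l f1 && beval a t l f2
  | Impl f1 f2 => implb (beval a t l f1) (beval a t l f2)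
  | Iff f1 f2 => Bool.eqb (beval a t l f1) (beval a t l f2)
  | Tri f1 f2 => t f1 f2
  | Rel f1 f2 => l f1 f2
  end.

Definition tautology (f : form) : Prop :=
  forall (a : nat -> bool) (t l : form -> form -> bool), beval a t l f = true.

Fixpoint subst (s : nat -> form) (f : form) : form :=
  match f with
  | Var n => s n
  | Neg f1 => Neg (subst s f1)
  | Or f1 f2 => Or (subst s f1) (subst s f2)
  | And f1 f2 => And (subst s f1) (subst s f2)
  | Impl f1 f2 => Impl (subst s f1) (subst s f2)
  | Iff f1 f2 => Iff (subst s f1) (subst s f2)
  | Tri f1 f2 => Tri (subst s f1) (subst s f2)
  | Rel f1 f2 => Rel (subst s f1) (subst s f2)
  end.

Definition p : form := Var 0.
Definition q : form := Var 1.

Definition ax_rel : form := Impl (Rel p q) (Impl p q).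
Definition ax_tri : form := Iff (Tri p q) (And (Rel p q) (And p q)).

Definition ax_s : form := Impl (Rel p q) (Or (Rel q p) (Neg (Impl q p))).
Definition ax_n1 : form := Impl (Rel (Neg p) q) (Or (Rel p q) (Neg (Impl p q))).
Definition ax_n2 : form :=
  Impl (And (Rel (Neg (Neg p)) q) (Neg (Impl (Neg p) q))) (Rel p q).
Definition ax_sn : form := Impl (And (Neg (Impl p q)) (Rel (Neg p) q)) (Rel q p).
Definition ax_ns : form := Impl (And (Neg (Impl (Neg p) q)) (Rel q (Neg p))) (Rel p q).

Definition FSN_axiom (f : form) : Prop :=
  f = ax_rel \/ f = ax_tri \/ f = ax_s \/ f = ax_n1 \/ f = ax_n2 \/
  f = ax_sn \/ f = ax_ns.

Inductive FSN : form -> Prop :=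
| FSN_taut : forall f, tautology f -> FSN f
| FSN_ax : forall f, FSN_axiom f -> FSN f
| FSN_subst : forall s f, FSN f -> FSN (subst s f)
| FSN_mp : forall f g, FSN (Impl f g) -> FSN f -> FSN g.

(* Derivability from premises: the least set containing FSN and Sigma,
   closed under modus ponens (equivalent to existence of a finite
   derivation sequence). *)
Inductive derivable (Sigma : form -> Prop) : form -> Prop :=
| der_thm : forall f, FSN f -> derivable Sigma f
| der_hyp : forall f, Sigma f -> derivable Sigma f
| der_mp : forall f g, derivable Sigma (Impl f g) -> derivable Sigma f ->
    derivable Sigma g.

Fixpoint sat (v : nat -> bool) (R : form -> form -> Prop) (f : form) : Prop :=
  match f with
  | Var n => v n = true
  | Neg f1 => ~ sat v R f1
  | Or f1 f2 => sat v R f1 \/ sat v R f2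
  | And f1 f2 => sat v R f1 /\ sat v R f2
  | Impl f1 f2 => sat v R f1 -> sat v R f2
  | Iff f1 f2 => (sat v R f1 <-> sat v R f2)
  | Tri f1 f2 => (sat v R f1 /\ sat v R f2) /\ R f1 f2
  | Rel f1 f2 => (sat v R f1 -> sat v R f2) /\ R f1 f2
  end.

Definition sem_conseq (Rs : (form -> form -> Prop) -> Prop)
    (Sigma : form -> Prop) (f : form) : Prop :=
  forall R, Rs R -> forall v : nat -> bool,
    (forall g, Sigma g -> sat v R g) -> sat v R f.

Definition R_sn (R : form -> form -> Prop) : Prop :=
  (forall f g, R f g -> R g f) /\
  (forall f g, R (Neg f) g -> R f g).

(* Main.v *)
Require Import Defs.
From Stdlib Require Import Arith Lia Cantor Classical ClassicalEpsilon.

Definition dec (P : Prop) : bool :=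
  if excluded_middle_informative P then true else false.

Lemma dec_true (P : Prop) : dec P = true <-> P.
Proof. unfold dec; destruct (excluded_middle_informative P); split; intuition; discriminate. Qed.

Lemma beval_sat v R f :
  beval v (fun a b => dec (sat v R (Tri a b))) (fun a b => dec (sat v R (Rel a b))) f = true
  <-> sat v R f.
Proof.
  induction f; simpl.
  - tauto.
  - rewrite Bool.negb_true_iff, <- Bool.not_true_iff_false. tauto.
  - rewrite Bool.orb_true_iff. tauto.
  - rewrite Bool.andb_true_iff. tauto.
  - destruct (beval _ _ _ f1), (beval _ _ _ f2); simpl; intuition; discriminate.
  - destruct (beval _ _ _ f1), (beval _ _ _ f2); simpl; intuition; discriminate.
  - apply dec_true.
  - apply dec_true.
Qed.

Lemma sat_subst s v R f :
  sat v R (subst s f) <->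
  sat (fun n => dec (sat v R (s n))) (fun a b => R (subst s a) (subst s b)) f.
Proof.
  induction f; simpl; try tauto.
  rewrite dec_true; tauto.
Qed.

Lemma FSN_sound f : FSN f -> forall R, R_sn R -> forall v, sat v R f.
Proof.
  induction 1; intros R HR v.
  - apply beval_sat. apply H.
  - destruct HR as [Hs Hn].
    destruct H as [->|[->|[->|[->|[->|[->| ->]]]]]]; simpl; unfold p, q; simpl.
    + tauto.
    + tauto.
    + intros [H1 H2]. destruct (classic (v 1 = true -> v 0 = true)); [left; auto| right; auto].
    + intros [H1 H2]. destruct (classic (v 0 = true -> v 1 = true)); [left; auto| right; auto].
    + intros [[H1 H2] H3]. split; [tauto|]. apply Hn, Hn, H2.
    + intros [H1 [H2 H3]]. split; [tauto|]. apply Hs, Hn, H3.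
    + intros [H1 [H2 H3]]. split; [tauto|]. apply Hn, Hs, H3.
  - apply sat_subst. apply IHFSN. destruct HR as [Hs Hn]. split; intros a b H'.
    + apply Hs, H'.
    + apply Hn. exact H'.
  - specialize (IHFSN1 R HR v). specialize (IHFSN2 R HR v). simpl in IHFSN1. auto.
Qed.

Lemma soundness Sigma phi : derivable Sigma phi -> sem_conseq R_sn Sigma phi.
Proof.
  induction 1; intros R HR v Hv.
  - apply FSN_sound; auto.
  - auto.
  - specialize (IHderivable1 R HR v Hv). simpl in IHderivable1. auto.
Qed.

Ltac taut_tac := intros ? ? ?; simpl;
  repeat match goal with |- context [beval ?a ?t ?l ?x] => destruct (beval a t l x) end;
  reflexivity.

Lemma der_mono (S T : form -> Prop) f :
  (forall x, S x -> T x) -> derivable S f -> derivable T f.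
Proof.
  intros H D; induction D.
  - apply der_thm; auto.
  - apply der_hyp; auto.
  - eapply der_mp; eauto.
Qed.

Lemma der_taut S f : tautology f -> derivable S f.
Proof. intros; apply der_thm, FSN_taut; auto. Qed.

Lemma deduction S x g :
  derivable (fun y => S y \/ y = x) g -> derivable S (Impl x g).
Proof.
  induction 1.
  - eapply der_mp. apply der_taut. 2: apply der_thm; eauto. taut_tac.
  - destruct H as [H| ->].
    + eapply der_mp. apply der_taut. 2: apply der_hyp; eauto. taut_tac.
    + apply der_taut. taut_tac.
  - apply (der_mp _ _ _ (der_mp _ _ _ (der_taut _ (Impl (Impl x (Impl f g)) (Impl (Impl x f) (Impl x g))) ltac:(taut_tac)) IHderivable1) IHderivable2).
Qed.

Fixpoint enc (f : form) : nat :=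
  match f with
  | Var n => to_nat (0, n)
  | Neg a => to_nat (1, enc a)
  | Or a b => to_nat (2, to_nat (enc a, enc b))
  | And a b => to_nat (3, to_nat (enc a, enc b))
  | Impl a b => to_nat (4, to_nat (enc a, enc b))
  | Iff a b => to_nat (5, to_nat (enc a, enc b))
  | Tri a b => to_nat (6, to_nat (enc a, enc b))
  | Rel a b => to_nat (7, to_nat (enc a, enc b))
  end.

Lemma to_nat_inj a b : to_nat a = to_nat b -> a = b.
Proof. intros H. rewrite <- (cancel_of_to a), <- (cancel_of_to b), H. reflexivity. Qed.

Lemma enc_inj f g : enc f = enc g -> f = g.
Proof.
  revert g; induction f; destruct g; cbn [enc]; intros H;
  apply to_nat_inj in H;
  pose proof (f_equal fst H) as Hk; cbn [fst] in Hk; try discriminate;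
  pose proof (f_equal snd H) as H2; cbn [snd] in H2; clear H Hk;
  try (f_equal; auto; fail);
  apply to_nat_inj in H2;
  pose proof (f_equal fst H2) as H3; pose proof (f_equal snd H2) as H4; cbn [fst snd] in H3, H4;
  f_equal; auto.
Qed.

Section Lind.
Variable Sigma : form -> Prop.
Variable phi : form.
Hypothesis Hnd : ~ derivable Sigma phi.

Fixpoint G (n : nat) : form -> Prop :=
  match n with
  | 0 => Sigma
  | S n => fun x => G n x \/
      (enc x = n /\ ~ derivable (fun y => G n y \/ y = x) phi)
  end.

Lemma G_mono n m x : n <= m -> G n x -> G m x.
Proof. induction 1; simpl; auto. Qed.

Lemma G_cons n : ~ derivable (G n) phi.
Proof.
  induction n; simpl; auto.
  destruct (classic (exists x, enc x = n /\ ~ derivable (fun y => G n y \/ y = x) phi))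
    as [[x [Ex Dx]]|Hno].
  - intro D; apply Dx. eapply der_mono; [|exact D].
    intros y [Hy|[Ey _]]; auto. right. apply enc_inj. congruence.
  - intro D; apply IHn. eapply der_mono; [|exact D].
    intros y [Hy|[Ey Dy]]; auto. exfalso; apply Hno; eauto.
Qed.

Definition Gam x := exists n, G n x.

Lemma Gam_compact S f : derivable S f -> (forall x, S x -> Gam x) ->
  exists n, derivable (G n) f.
Proof.
  induction 1; intros HS.
  - exists 0; apply der_thm; auto.
  - destruct (HS f H) as [n Hn]. exists n; apply der_hyp; auto.
  - destruct (IHderivable1 HS) as [n1 D1]. destruct (IHderivable2 HS) as [n2 D2].
    exists (max n1 n2). eapply der_mp.
    + eapply der_mono; [|exact D1]. intros; eapply G_mono; [|eauto]; lia.
    + eapply der_mono; [|exact D2]. intros; eapply G_mono; [|eauto]; lia.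
Qed.

Lemma Gam_cons : ~ derivable Gam phi.
Proof.
  intro D. destruct (Gam_compact _ _ D (fun x H => H)) as [n Dn]. exact (G_cons n Dn).
Qed.

Lemma Gam_max x : ~ derivable (fun y => Gam y \/ y = x) phi -> Gam x.
Proof.
  intro H. exists (S (enc x)). simpl. right. split; auto.
  intro D; apply H. eapply der_mono; [|exact D].
  intros y [Hy|Hy]; [left; exists (enc x); auto|auto].
Qed.

Lemma Gam_closed x : derivable Gam x -> Gam x.
Proof.
  intros D. apply NNPP; intro Hx.
  assert (D2 : derivable (fun y => Gam y \/ y = x) phi).
  { apply NNPP; intro; apply Hx, Gam_max; auto. }
  apply deduction in D2. apply Gam_cons. eapply der_mp; eauto.
Qed.

Lemma Gam_compl x : Gam x \/ Gam (Neg x).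
Proof.
  apply NNPP; intro H. apply Gam_cons.
  assert (D1 : derivable (fun y => Gam y \/ y = x) phi).
  { apply NNPP; intro; apply H; left; apply Gam_max; auto. }
  assert (D2 : derivable (fun y => Gam y \/ y = Neg x) phi).
  { apply NNPP; intro; apply H; right; apply Gam_max; auto. }
  apply deduction in D1, D2.
  eapply der_mp; [eapply der_mp; [|exact D2]|exact D1].
  apply der_taut; taut_tac.
Qed.

Lemma Gam_consis x : Gam x -> Gam (Neg x) -> False.
Proof.
  intros H1 H2. apply Gam_cons.
  eapply der_mp; [eapply der_mp; [|apply der_hyp; exact H2]|apply der_hyp; exact H1].
  apply der_taut; taut_tac.
Qed.

Lemma Gam_thm x : FSN x -> Gam x.
Proof. intros; apply Gam_closed, der_thm; auto. Qed.

Lemma Gam_mp x y : Gam (Impl x y) -> Gam x -> Gam y.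
Proof. intros; apply Gam_closed; eapply der_mp; apply der_hyp; eauto. Qed.

Lemma Gam_t1 x y : tautology (Impl x y) -> Gam x -> Gam y.
Proof. intros; eapply Gam_mp; eauto. apply Gam_thm, FSN_taut; auto. Qed.

Lemma Gam_t2 x y z : tautology (Impl x (Impl y z)) -> Gam x -> Gam y -> Gam z.
Proof. intros; eapply Gam_mp; eauto. eapply Gam_t1; eauto. Qed.

Lemma Gam_neg x : Gam (Neg x) <-> ~ Gam x.
Proof. split. intros H1 H2; eapply Gam_consis; eauto. destruct (Gam_compl x); tauto. Qed.

Lemma Gam_and x y : Gam (And x y) <-> Gam x /\ Gam y.
Proof.
  split. intro H; split; (eapply Gam_t1; [|exact H]); taut_tac.
  intros [H1 H2]; eapply Gam_t2; [|exact H1|exact H2]; taut_tac.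
Qed.

Lemma Gam_or x y : Gam (Or x y) <-> Gam x \/ Gam y.
Proof.
  split.
  - intro H. destruct (Gam_compl x) as [H1|H1]; auto. right.
    eapply Gam_t2; [|exact H|exact H1]; taut_tac.
  - intros [H|H]; (eapply Gam_t1; [|exact H]); taut_tac.
Qed.

Lemma Gam_impl x y : Gam (Impl x y) <-> (Gam x -> Gam y).
Proof.
  split. intros; eapply Gam_mp; eauto.
  intros H. destruct (Gam_compl x) as [H1|H1].
  - eapply Gam_t1; [|apply H; exact H1]; taut_tac.
  - eapply Gam_t1; [|exact H1]; taut_tac.
Qed.

Lemma Gam_iff x y : Gam (Iff x y) <-> (Gam x <-> Gam y).
Proof.
  split.
  - intros H; split; intros H0; (eapply Gam_t2; [|exact H|exact H0]); taut_tac.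
  - intros H. destruct (Gam_compl x) as [H1|H1].
    + eapply Gam_t2; [|exact H1|exact (proj1 H H1)]; taut_tac.
    + assert (H2 : Gam (Neg y)). { apply Gam_neg. rewrite <- H. apply Gam_neg; auto. }
      eapply Gam_t2; [|exact H1|exact H2]; taut_tac.
Qed.

Definition sb (x y : form) : nat -> form :=
  fun n => match n with 0 => x | 1 => y | _ => Var n end.

Lemma Gam_ax A x y : FSN_axiom A -> Gam (subst (sb x y) A).
Proof. intros; apply Gam_thm, FSN_subst, FSN_ax; auto. Qed.

Lemma ax_rel_i x y : Gam (Rel x y) -> Gam (Impl x y).
Proof.
  intros; eapply Gam_mp; [|eauto].
  exact (Gam_ax ax_rel x y ltac:(unfold FSN_axiom; tauto)).
Qed.

Lemma ax_tri_i x y : Gam (Tri x y) <-> Gam (Rel x y) /\ Gam x /\ Gam y.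
Proof.
  rewrite <- !Gam_and, <- Gam_iff.
  exact (Gam_ax ax_tri x y ltac:(unfold FSN_axiom; tauto)).
Qed.

Lemma ax_s_i x y : Gam (Rel x y) -> Gam (Impl y x) -> Gam (Rel y x).
Proof.
  intros H1 H2.
  pose proof (Gam_ax ax_s x y ltac:(unfold FSN_axiom; tauto)) as A.
  change (Gam (Impl (Rel x y) (Or (Rel y x) (Neg (Impl y x))))) in A.
  rewrite Gam_impl, Gam_or, Gam_neg in A. destruct (A H1); tauto.
Qed.

Lemma ax_n1_i x y : Gam (Rel (Neg x) y) -> Gam (Impl x y) -> Gam (Rel x y).
Proof.
  intros H1 H2.
  pose proof (Gam_ax ax_n1 x y ltac:(unfold FSN_axiom; tauto)) as A.
  change (Gam (Impl (Rel (Neg x) y) (Or (Rel x y) (Neg (Impl x y))))) in A.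
  rewrite Gam_impl, Gam_or, Gam_neg in A. destruct (A H1); tauto.
Qed.

Lemma ax_sn_i x y : Gam x -> ~ Gam y -> Gam (Rel (Neg x) y) -> Gam (Rel y x).
Proof.
  intros H1 H2 H3.
  pose proof (Gam_ax ax_sn x y ltac:(unfold FSN_axiom; tauto)) as A.
  change (Gam (Impl (And (Neg (Impl x y)) (Rel (Neg x) y)) (Rel y x))) in A.
  rewrite Gam_impl, Gam_and, Gam_neg, Gam_impl in A. tauto.
Qed.

Lemma ax_ns_i x y : ~ Gam x -> ~ Gam y -> Gam (Rel y (Neg x)) -> Gam (Rel x y).
Proof.
  intros H1 H2 H3.
  pose proof (Gam_ax ax_ns x y ltac:(unfold FSN_axiom; tauto)) as A.
  change (Gam (Impl (And (Neg (Impl (Neg x) y)) (Rel y (Neg x))) (Rel x y))) in A.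
  rewrite Gam_impl, Gam_and, Gam_neg, Gam_impl, Gam_neg in A. tauto.
Qed.

Definition I (x y : form) : Prop :=
  (Gam (Impl x y) -> Gam (Rel x y)) /\ (Gam (Impl y x) -> Gam (Rel y x)).

Lemma Rel_I x y : Gam (Rel x y) -> I x y.
Proof.
  intros H; split; intros; auto. apply ax_s_i; auto.
Qed.

Lemma I_neg x y : I (Neg x) y -> I x y.
Proof.
  unfold I; rewrite !Gam_impl, !Gam_neg. intros [H1 H2].
  destruct (classic (Gam x)) as [Hx|Hx]; destruct (classic (Gam y)) as [Hy|Hy].
  - assert (R1 : Gam (Rel x y)) by (apply ax_n1_i; [apply H1; tauto| apply Gam_impl; tauto]).
    split; intros; auto. apply ax_s_i; auto. apply Gam_impl; tauto.
  - split; intros; [tauto|]. apply ax_sn_i; auto. apply H1; tauto.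
  - split; intros; [|tauto]. apply ax_n1_i; [apply H1; tauto| apply Gam_impl; tauto].
  - assert (R1 : Gam (Rel x y)) by (apply ax_ns_i; auto; apply H2; tauto).
    split; intros; auto. apply ax_s_i; auto. apply Gam_impl; tauto.
Qed.

Lemma I_Rsn : R_sn I.
Proof. split. intros f g [H1 H2]; split; auto. exact I_neg. Qed.

Lemma truth v : (forall n, v n = true <-> Gam (Var n)) ->
  forall f, sat v I f <-> Gam f.
Proof.
  intros Hv; induction f; simpl.
  - apply Hv.
  - rewrite Gam_neg; tauto.
  - rewrite Gam_or; tauto.
  - rewrite Gam_and; tauto.
  - rewrite Gam_impl; tauto.
  - rewrite Gam_iff; tauto.
  - rewrite ax_tri_i, IHf1, IHf2. split.
    + intros [[H1 H2] [H3 _]]. repeat split; auto. apply H3, Gam_impl; auto.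
    + intros [H1 [H2 H3]]. split; auto. apply Rel_I; auto.
  - rewrite IHf1, IHf2, <- Gam_impl. split.
    + intros [H1 [H2 _]]. auto.
    + intros H; split; [apply ax_rel_i; auto| apply Rel_I; auto].
Qed.

End Lind.

Theorem mainTheorem18 :
  forall (Sigma : form -> Prop) (phi : form),
    derivable Sigma phi <-> sem_conseq R_sn Sigma phi.
Proof.
  intros Sigma phi; split; [apply soundness|].
  intros Hs. apply NNPP; intro Hnd.
  set (v := fun n => dec (Gam Sigma phi (Var n))).
  assert (Hv : forall n, v n = true <-> Gam Sigma phi (Var n)) by (intro; apply dec_true).
  pose proof (truth Sigma phi Hnd v Hv) as T.
  apply (Gam_cons Sigma phi Hnd). apply der_hyp. apply T.
  apply Hs. apply I_Rsn; auto. intros g Hg. apply T. exists 0; exact Hg.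
Qed.
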